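(* Let $(V_n)_{n\geq 1}$ be an eventually polynomial sequence of representations, $V_n$ a representation of $S_n$. Then there exists $N$ such that the sign representation does not occur in $V_n$ for all $n\geq N$. In particular, for every partition $\lambda$, the sign representation of $S_n$ does not occur in the restriction of $W_\lambda(\mathbb C^n)$ to $S_n$ for any $n>|\lambda|+1$.
   Context: For $i\geq1$, $X_i(\sigma)$ denotes the number of $i$-cycles of a permutation $\sigma$. A sequence $(V_n)$ with $V_n$ a representation of $S_n$ is eventually polynomial if there exist $p\in\mathbb C[X_1,X_2,\dotsc]$ and $N\geq0$ such that $p(X_1(\sigma),X_2(\sigma),\dotsc)$ equals the character of $V_n$ at $\sigma$ for all $n\geq N$ and $\sigma\in S_n$. $W_\lambda(\mathbb C^n)$ is the irreducible polynomial representation (Weyl module) of $GL_n(\mathbb C)$ indexed by $\lambda$ (zero if $\lambda$ has more than $n$ parts), and $S_n$ is embedded in $GL_n(\mathbb C)$ as permutation matrices. *)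

(* Defs.v *)
From HB Require Import structures.
From mathcomp Require Import all_boot all_order all_algebra all_fingroup.
From mathcomp Require Import all_solvable all_field all_character.
From mathcomp Require Import mpoly.

Set Implicit Arguments.
Unset Strict Implicit.
Unset Printing Implicit Defensive.

Import GRing.Theory Num.Theory.
Local Open Scope ring_scope.

(* Cycle counts: X_i(s) = number of i-cycles of s (fixed points are    *)
(* 1-cycles; porbits s is the set of all cycles of s).                 *)
Definition ncycles (n : nat) (s : 'S_n) (i : nat) : nat :=
  #|[set C in porbits s | #|C| == i]|.

(* A sequence (V_n) of representations of S_n (V_n of degree d n) is   *)
(* eventually polynomial: there are finitely many variables X_1..X_k, *)
(* a polynomial p in C[X_1,..,X_k] (variable j : 'I_k stands for       *)
(* X_(j+1)) and N with chi_{V_n}(s) = p(X_1(s),...,X_k(s)) for n >= N. *)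
Definition eventually_polynomial (d : nat -> nat)
    (rV : forall n, mx_representation algC [set: 'S_n]%G (d n)) : Prop :=
  exists (k : nat) (p : {mpoly algC[k]}) (N : nat),
    forall n, (N <= n)%N -> forall s : 'S_n,
      cfRepr (rV n) s = p.@[fun j : 'I_k => (ncycles s j.+1)%:R].

Definition sign_mx n (s : 'S_n) : 'M[algC]_1 := ((-1) ^+ odd_perm s)%:M.

Lemma sign_mx_repr n : mx_repr [set: 'S_n] (@sign_mx n).
Proof.
split; first by rewrite /sign_mx odd_perm1 expr0.
move=> x y _ _; rewrite /sign_mx odd_permM signr_addb.
by rewrite -scalar_mxM.
Qed.

Definition sign_repr n : mx_representation algC [set: 'S_n]%G 1 :=
  MxRepresentation (@sign_mx_repr n).

(* The tensor power (C^n)^{(x)k}, with basis e_f indexed by            *)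
(* f : {ffun 'I_k -> 'I_n} (e_f = e_{f 0} (x) ... (x) e_{f (k-1)}),      *)
(* vectors being row vectors.  matF F is the matrix of e_f |-> e_{F f}. *)
Definition tdim k n := #|{ffun 'I_k -> 'I_n}|.

Definition matF k n (F : {ffun 'I_k -> 'I_n} -> {ffun 'I_k -> 'I_n})
  : 'M[algC]_(tdim k n) :=
  \matrix_(i, j) ((F (enum_val i) == enum_val j)%:R).

Lemma matF_mul k n (F G : {ffun 'I_k -> 'I_n} -> {ffun 'I_k -> 'I_n}) :
  matF F *m matF G = matF (G \o F).
Proof.
apply/matrixP => i j; rewrite !mxE (bigD1 (enum_rank (F (enum_val i)))) //=.
rewrite !mxE enum_rankK eqxx mul1r big1 ?addr0 // => l Hl.
rewrite !mxE; case: eqP => [E|]; last by rewrite mul0r.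
by rewrite E enum_valK eqxx in Hl.
Qed.

Lemma eq_matF k n (F G : {ffun 'I_k -> 'I_n} -> {ffun 'I_k -> 'I_n}) :
  (forall f, F f = G f) -> matF F = matF G.
Proof. by move=> E; apply/matrixP => i j; rewrite !mxE E. Qed.

Lemma matF_id k n : matF (@id {ffun 'I_k -> 'I_n}) = 1%:M.
Proof.
by apply/matrixP => i j; rewrite !mxE (inj_eq enum_val_inj).
Qed.

(* S_n acting on (C^n)^{(x)k} as (the restriction to permutation       *)
(* matrices of) g |-> g^{(x)k}: e_f |-> e_{s o f}.                      *)
Definition tens_act k n (s : 'S_n) : 'M[algC]_(tdim k n) :=
  matF (fun f => [ffun p => s (f p)]).

Lemma tens_act_repr k n : mx_repr [set: 'S_n] (@tens_act k n).
Proof.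
split.
  rewrite /tens_act -(@matF_id k n); apply: eq_matF => f.
  by apply/ffunP => p; rewrite ffunE perm1.
move=> x y _ _; rewrite /tens_act matF_mul; apply: eq_matF => f.
by apply/ffunP => p; rewrite /= !ffunE permM.
Qed.

Definition tens_repr k n : mx_representation algC [set: 'S_n]%G (tdim k n) :=
  MxRepresentation (@tens_act_repr k n).

Definition pos_act k n (t : 'S_k) : 'M[algC]_(tdim k n) :=
  matF (fun f : {ffun 'I_k -> 'I_n} => [ffun p => f (t p)]).

Lemma pos_tens_comm k n (t : 'S_k) (s : 'S_n) :
  pos_act n t *m tens_act k s = tens_act k s *m pos_act n t.
Proof.
rewrite /pos_act /tens_act !matF_mul; apply: eq_matF => f.
by apply/ffunP => p; rewrite /= !ffunE.
Qed.

Definition is_partition (la : seq nat) : bool :=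
  sorted geq la && all (fun x => 0 < x)%N la.

(* The Young diagram of la, its cells numbered 0..|la|-1 row by row    *)
(* (the row-reading tableau).  Row and column of cell p.               *)
Definition rowof (la : seq nat) (p : nat) : nat :=
  count (fun r => sumn (take r.+1 la) <= p)%N (iota 0 (size la)).
Definition colof (la : seq nat) (p : nat) : nat :=
  (p - sumn (take (rowof la p) la))%N.

Definition row_group (la : seq nat) : {set 'S_(sumn la)} :=
  [set t : 'S_(sumn la) | [forall p, rowof la (t p) == rowof la p]].
Definition col_group (la : seq nat) : {set 'S_(sumn la)} :=
  [set t : 'S_(sumn la) | [forall p, colof la (t p) == colof la p]].

Definition young (la : seq nat) (n : nat) : 'M[algC]_(tdim (sumn la) n) :=
  \sum_(r in row_group la) \sum_(c in col_group la)
     ((-1) ^+ odd_perm c) *: (pos_act n r *m pos_act n c).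

Lemma young_comm la n (s : 'S_n) :
  young la n *m tens_act (sumn la) s = tens_act (sumn la) s *m young la n.
Proof.
rewrite /young mulmx_suml mulmx_sumr; apply: eq_bigr => r _.
rewrite mulmx_suml mulmx_sumr; apply: eq_bigr => c _.
rewrite -scalemxAl -scalemxAr; congr (_ *: _).
by rewrite -mulmxA pos_tens_comm mulmxA pos_tens_comm mulmxA.
Qed.

(* The Weyl module W_la(C^n) = image of the Young symmetrizer on         *)
(* (C^n)^{(x)|la|} (Fulton-Harris), which is zero when la has more than  *)
(* n parts; it is stable under GL_n, in particular under S_n.          *)
Lemma young_module la n : mxmodule (tens_repr (sumn la) n) (young la n).
Proof.
apply/mxmoduleP => s _; rewrite /= young_comm; exact: submxMl.
Qed.

Definition weyl_res (la : seq nat) (n : nat) :=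
  submod_repr (young_module la n).

(* Main.v *)
Require Import Defs.
From HB Require Import structures.
From mathcomp Require Import all_boot all_order all_algebra all_fingroup.
From mathcomp Require Import all_solvable all_field all_character.
From mathcomp Require Import mpoly.
From mathcomp Require Import zify.
Import GRing.Theory Num.Theory.
Local Open Scope ring_scope.
Set Implicit Arguments.
Lemma sign_inv n (x0 : 'I_n) (g : 'S_n -> algC) (U : 'S_n -> {set 'I_n}) :
  (forall s, g s != 0 -> (#|U s| + 2 <= n)%N) ->
  (forall s u v, g s != 0 -> u \notin U s -> v \notin U s ->
     U (tperm u v * s)%g = U s /\ g (tperm u v * s)%g = g s) ->
  \sum_(s : 'S_n) (-1) ^+ odd_perm s * g s = 0.
Proof.
move=> Hcard Hinv.
pose e s := enum (~: U s).
pose u s := nth x0 (e s) 0; pose v s := nth x0 (e s) 1.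
pose phi s := if g s != 0 then (tperm (u s) (v s) * s)%g else s.
have Hsz s : g s != 0 -> (1 < size (e s))%N.
  move=> /Hcard; rewrite /e -cardE cardsCs card_ord; lia.
have Huv s : g s != 0 -> [/\ u s \notin U s, v s \notin U s & u s != v s].
  move=> gs; have sz := Hsz s gs.
  have m0 : u s \in e s by apply: mem_nth; apply: ltnW.
  have m1 : v s \in e s by apply: mem_nth.
  rewrite /e mem_enum inE in m0; rewrite /e mem_enum inE in m1.
  split => //; rewrite /u /v nth_uniq ?enum_uniq //; exact: ltnW.
have Hphi s : phi (phi s) = s.
  rewrite /phi; case gs: (g s != 0); last by rewrite gs.
  have [Hu Hv _] := Huv s gs.
  have [E1 E2] := Hinv s _ _ gs Hu Hv.
  rewrite E2 gs /u /v /e E1 mulgA tperm2 mul1g //.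
have Hterm s : (-1) ^+ odd_perm (phi s) * g (phi s) = - ((-1) ^+ odd_perm s * g s).
  rewrite /phi; case gs: (g s != 0); last by move/negbFE: gs => /eqP ->; rewrite !mulr0 oppr0.
  have [Hu Hv Huv'] := Huv s gs.
  have [E1 E2] := Hinv s _ _ gs Hu Hv.
  by rewrite E2 odd_permM odd_tperm Huv' signr_addb /= expr1 mulN1r mulNr.
set S := \sum_s _.
have E : S = - S.
  rewrite {1}/S (reindex_inj (can_inj Hphi)) /= -sumrN.
  by apply: eq_bigr => s _; rewrite Hterm.
have : S *+ 2 == 0 by rewrite mulr2n {1}E addNr.
by rewrite mulrn_eq0 /= => /eqP.
Qed.

Lemma porbit_agree n (s s' : 'S_n) y :
  (forall z, z \in porbit s y -> s' z = s z) -> porbit s' y = porbit s y.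
Proof.
move=> H.
have Hp i : (s' ^+ i)%g y = (s ^+ i)%g y.
  elim: i => [|i IH]; first by rewrite !expg0.
  by rewrite !expgSr !permM IH H // mem_porbit.
by apply/setP => z; apply/porbitP/porbitP => -[i ->]; exists i; rewrite Hp.
Qed.

Lemma card_bigcup_le (I : finType) (T : finType) (F : I -> {set T}) :
  (#|\bigcup_i F i| <= \sum_i #|F i|)%N.
Proof.
apply: (big_rec2 (fun (A : {set T}) m => #|A| <= m)%N); first by rewrite cards0.
move=> i A m _ H; apply: leq_trans (leq_card_setU _ _) _; exact: leq_add.
Qed.

Lemma prod_nat_bool (I : finType) (b : I -> bool) :
  \prod_i ((b i)%:R : algC) = ([forall i, b i])%:R.
Proof.
case: forallP => H; first by rewrite big1 // => i _; rewrite H.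
have [i Hi] : exists i, ~~ b i.
  by apply/existsP; rewrite -negb_forall; apply/forallP.
by rewrite (bigD1 i) //= (negbTE Hi) mul0r.
Qed.

Lemma tupleA n (J : finType) (l : J -> nat) (x : {ffun J -> 'I_n}) :
  (\sum_t l t + 2 <= n)%N ->
  \sum_(s : 'S_n) (-1) ^+ odd_perm s *
     \prod_t ((#|porbit s (x t)| == l t)%:R : algC) = 0.
Proof.
move=> Hn.
have x0 : 'I_n by exists 0%N; lia.
apply: (@sign_inv n x0 _ (fun s => \bigcup_t porbit s (x t))).
  move=> s; rewrite prod_nat_bool pnatr_eq0 eqb0 negbK => /forallP H.
  suff H2 : (#|\bigcup_t porbit s (x t)| <= \sum_t l t)%N by lia.
  apply: leq_trans (@card_bigcup_le _ _ (fun t => porbit s (x t))) _.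
  by apply: leq_sum => t _; rewrite (eqP (H t)).
move=> s u v _ Hu Hv.
have E t : porbit (tperm u v * s)%g (x t) = porbit s (x t).
  apply: porbit_agree => z Hz; rewrite permM tpermD //.
    by apply: contraNneq Hu => ->; apply/bigcupP; exists t.
  by apply: contraNneq Hv => ->; apply/bigcupP; exists t.
by split; [apply: eq_bigr => t _ | apply: eq_bigr => t _; rewrite E].
Qed.

Lemma tupleB n (J : finType) (x : {ffun J -> 'I_n}) :
  (#|J| + 2 <= n)%N ->
  \sum_(s : 'S_n) (-1) ^+ odd_perm s *
     \prod_t ((s (x t) == x t)%:R : algC) = 0.
Proof.
move=> Hn.
have x0 : 'I_n by exists 0%N; lia.
apply: (@sign_inv n x0 _ (fun s => [set x t | t : J])).
  move=> s _; apply: leq_trans Hn; rewrite leq_add2r.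
  exact: leq_imset_card.
move=> s u v _ Hu Hv; split => //; apply: eq_bigr => t _.
rewrite permM tpermD //.
  by apply: contraNneq Hu => ->; apply: imset_f.
by apply: contraNneq Hv => ->; apply: imset_f.
Qed.

Lemma ncycles_count n (s : 'S_n) j :
  (\sum_(y : 'I_n) (#|porbit s y| == j) = ncycles s j * j)%N.
Proof.
rewrite /ncycles.
set A := [set C in porbits s | #|C| == j].
transitivity (\sum_(y : 'I_n) \sum_(C in A) (y \in C : nat))%N.
  apply: eq_bigr => y _; rewrite big_mkcond (bigD1 (porbit s y)) //=.
  rewrite big1 ?addn0.
    by rewrite !inE imset_f // porbit_id /=; case: (_ == j).
  move=> C HC; rewrite !inE; case HCA: (C \in porbits s) => //=.
  case/imsetP: HCA HC => z _ -> HC; case Hy: (y \in porbit s z); last by case: (_ == j).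
  by rewrite -eq_porbit_mem in Hy; rewrite (eqP Hy) eqxx in HC.
rewrite exchange_big /=.
rewrite (eq_bigr (fun _ => j)) ?sum_nat_const //.
move=> C; rewrite inE => /andP[_ /eqP <-].
rewrite -sum1_card [RHS]big_mkcond /=. apply: eq_bigr => y _; by case: (y \in C).
Qed.

Lemma ncyclesR n (s : 'S_n) j : (0 < j)%N ->
  (ncycles s j)%:R = \sum_(y : 'I_n) ((#|porbit s y| == j)%:R / j%:R : algC).
Proof.
move=> j0; rewrite -mulr_suml -natr_sum ncycles_count natrM mulfK //.
by rewrite pnatr_eq0 -lt0n.
Qed.

Lemma monomial_vanish n k (m : 'X_{1..k}) :
  ((\sum_(i < k) m i * i.+1) + 2 <= n)%N ->
  \sum_(s : 'S_n) (-1) ^+ odd_perm s *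
     \prod_(i < k) ((ncycles s i.+1)%:R : algC) ^+ m i = 0.
Proof.
move=> Hn.
pose J := {i : 'I_k & 'I_(m i)}.
pose l (p : J) := (tag p).+1.
have E s : \prod_(i < k) ((ncycles s i.+1)%:R : algC) ^+ m i
           = \prod_(p : J) (ncycles s (l p))%:R.
  rewrite -(sig_big_dep xpredT (fun _ => xpredT)
              (fun i (_ : 'I_(m i)) => ((ncycles s i.+1)%:R : algC))) /=.
  by apply: eq_bigr => i _; rewrite prodr_const card_ord.
have El : (\sum_(p : J) l p = \sum_(i < k) m i * i.+1)%N.
  rewrite -(sig_big_dep xpredT (fun _ => xpredT)
              (fun i (_ : 'I_(m i)) => i.+1)) /=.
  by apply: eq_bigr => i _; rewrite sum_nat_const card_ord.
transitivity (\sum_(s : 'S_n) \sum_(x : {ffun J -> 'I_n})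
   ((-1) ^+ odd_perm s * \prod_p ((#|porbit s (x p)| == l p)%:R : algC))
     * \prod_p ((l p)%:R)^-1).
  apply: eq_bigr => s _; rewrite E.
  rewrite (eq_bigr (fun p : J => \sum_(y : 'I_n)
     ((#|porbit s y| == l p)%:R / (l p)%:R : algC))); last first.
    by move=> p _; apply: ncyclesR.
  rewrite bigA_distr_bigA mulr_sumr; apply: eq_bigr => x _.
  by rewrite -mulrA -big_split.
rewrite exchange_big /=; apply: big1 => x _.
by rewrite -mulr_suml tupleA ?mul0r // El.
Qed.

Lemma sign_val n (s : 'S_n) :
  cfRepr (sign_repr n) s = (-1) ^+ odd_perm s.
Proof. by rewrite cfunE in_setT mulr1n /= /sign_mx mxtrace_scalar. Qed.

Lemma cfdot_sign n (chi : 'CF([set: 'S_n])) :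
  '[chi, cfRepr (sign_repr n)] =
  #|[set: 'S_n]|%:R^-1 * \sum_(s : 'S_n) (-1) ^+ odd_perm s * chi s.
Proof.
rewrite cfdotE; congr (_ * _).
rewrite (eq_bigl xpredT) //; last by move=> s; rewrite in_setT.
by apply: eq_bigr => s _; rewrite sign_val rmorph_sign mulrC.
Qed.

Lemma part1 (d : nat -> nat)
    (rV : forall n, mx_representation algC [set: 'S_n]%G (d n)) :
  eventually_polynomial rV ->
  exists N : nat, forall n : nat, (N <= n)%N ->
    '[cfRepr (rV n), cfRepr (sign_repr n)] = 0.
Proof.
move=> [k [p [N HN]]].
pose B := (\max_(m <- msupp p) (\sum_(i < k) m i * i.+1) + 2)%N.
exists (maxn N B) => n Hn.
rewrite cfdot_sign.
have HNn : (N <= n)%N by apply: leq_trans Hn; apply: leq_maxl.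
have HBn : (B <= n)%N by apply: leq_trans Hn; apply: leq_maxr.
rewrite (eq_bigr (fun s => \sum_(m <- msupp p)
   p@_m * ((-1) ^+ odd_perm s * \prod_(i < k) ((ncycles s i.+1)%:R : algC) ^+ m i))).
  rewrite exchange_big /= big_seq big1 ?mulr0 // => m Hm.
  rewrite -mulr_sumr monomial_vanish ?mulr0 //.
  apply: leq_trans HBn; rewrite /B leq_add2r.
  exact: (leq_bigmax_seq (F := fun m : 'X_{1..k} => (\sum_(i < k) m i * i.+1)%N) m Hm).
move=> s _; rewrite HN // mevalE mulr_sumr; apply: eq_bigr => m _.
by rewrite mulrCA.
Qed.

Lemma tens_zero k n : (k + 2 <= n)%N ->
  '[cfRepr (tens_repr k n), cfRepr (sign_repr n)] = 0.
Proof.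
move=> Hn; rewrite cfdot_sign.
rewrite (eq_bigr (fun s => \sum_(f : {ffun 'I_k -> 'I_n})
   (-1) ^+ odd_perm s * \prod_t ((s (f t) == f t)%:R : algC))).
  by rewrite exchange_big /= big1 ?mulr0 // => f _; rewrite tupleB // card_ord.
move=> s _; rewrite -mulr_sumr; congr (_ * _).
rewrite cfunE in_setT mulr1n /= /tens_act /matF /mxtrace.
rewrite (eq_bigr (fun i : 'I_(tdim k n) =>
   (([ffun p => s (enum_val i p)] == enum_val i)%:R : algC))); last first.
  by move=> i _; rewrite mxE.
rewrite /tdim -(big_enum_val (fun f : {ffun 'I_k -> 'I_n} =>
   (([ffun p => s (f p)] == f)%:R : algC))) /=.
apply: eq_bigr => f _; rewrite prod_nat_bool; congr (_%:R); congr (nat_of_bool _).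
apply/idP/idP => [/eqP E|/forallP E].
  by apply/forallP => t; rewrite -{2}E ffunE.
by apply/eqP/ffunP => t; rewrite ffunE (eqP (E t)).
Qed.

Lemma sub_zero n m (rG : mx_representation algC [set: 'S_n]%G m) U
  (modU : mxmodule rG U) :
  '[cfRepr rG, cfRepr (sign_repr n)] = 0 ->
  '[cfRepr (submod_repr modU), cfRepr (sign_repr n)] = 0.
Proof.
move=> H0.
have [W modW defW dxW] := mx_Maschke_pchar rG (algC'G_pchar _) modU (submx1 U).
have Hs := mx_rsim_dadd (rU := Representation (submod_repr modU))
   (rV := Representation (submod_repr modW)) (mxmodule1 rG) defW dxW
   (mx_rsim_refl _) (mx_rsim_refl _).
have E1 := cfRepr_sim Hs.
have E2 := cfRepr_sim (rsim_submod1 (mxmodule1 rG) (eqmx_refl _)).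
rewrite cfRepr_dadd E2 /= in E1.
rewrite E1 cfdotDl in H0.
have Ha := Cnat_cfdot_char (cfRepr_char (submod_repr modU)) (cfRepr_char (sign_repr n)).
have Hb := Cnat_cfdot_char (cfRepr_char (submod_repr modW)) (cfRepr_char (sign_repr n)).
move/eqP: H0; rewrite paddr_eq0 ?natr_ge0 // => /andP[/eqP -> _] //.
Qed.

Theorem corollary2p6 :
  (forall (d : nat -> nat)
          (rV : forall n, mx_representation algC [set: 'S_n]%G (d n)),
     eventually_polynomial rV ->
     exists N : nat, forall n : nat, (N <= n)%N ->
       '[cfRepr (rV n), cfRepr (sign_repr n)] = 0)
  /\
  (forall la : seq nat, is_partition la ->
     forall n : nat, ((sumn la).+1 < n)%N ->
       '[cfRepr (weyl_res la n), cfRepr (sign_repr n)] = 0).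
Proof.
split; first exact: part1.
move=> la _ n Hn; apply: sub_zero; apply: tens_zero; lia.
Qed.
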